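(* Fix $a,g>0$ and let $\rho_0\in C^\infty(\mathbb{T})$ be even and nonnegative with $\rho_0(0)=0$ and $\rho_0'\ge 0$ on $[0,\pi)$. Suppose $\rho\in C^\infty(\mathbb{T}\times[0,T))$ solves \[ \partial_t \rho + g\,(H_a\rho)\,\partial_x \rho = 0,\qquad \rho(\cdot,0)=\rho_0 . \] Then for all $t\in[0,T)$, $\rho(\cdot,t)$ is even and nonnegative, $\rho(0,t)=0$, and $\partial_x\rho(\cdot,t)\ge 0$ on $[0,\pi)$.
   Context: $\mathbb{T}=[-\pi,\pi)$ is the circle; functions on $\mathbb{T}$ are identified with $2\pi$-periodic functions on $\mathbb{R}$, and $C^\infty(\mathbb{T})$ denotes smooth $2\pi$-periodic functions with all derivatives bounded. For $a>0$, $H_a f(x) := \mathrm{P.V.}\int_{\mathbb{R}} f(x-y)K_a(y)\,dy$ with $K_a(y) := \frac{a^2}{\pi y(y^2+a^2)}$, applied to the periodic extension of $f$. *)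

(* Defs.v *)
From Stdlib Require Import Reals.
From Coquelicot Require Import Coquelicot.
Open Scope R_scope.

Definition Ka (a y : R) : R := a ^ 2 / (PI * y * (y ^ 2 + a ^ 2)).

(* h = H_a f x = P.V. int_R f(x-y) K_a(y) dy, i.e. the limit as eps -> 0+ of
   int_{-oo}^{-eps} f(x-y)K_a(y) dy + int_{eps}^{+oo} f(x-y)K_a(y) dy
   (both improper integrals converging). *)
Definition is_Ha (a : R) (f : R -> R) (x h : R) : Prop :=
  exists I1 I2 : R -> R,
    (forall eps, 0 < eps ->
       is_RInt_gen (fun y => f (x - y) * Ka a y)
         (Rbar_locally m_infty) (at_point (- eps)) (I1 eps) /\
       is_RInt_gen (fun y => f (x - y) * Ka a y)
         (at_point eps) (Rbar_locally p_infty) (I2 eps)) /\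
    filterlim (fun eps => I1 eps + I2 eps) (at_right 0) (locally h).

Definition smooth1 (f : R -> R) : Prop :=
  forall n x, ex_derive (Derive_n f n) x.

Definition periodic (f : R -> R) : Prop := forall x, f (x + 2 * PI) = f x.

Definition dom2 (T : Rbar) (p : R * R) : Prop :=
  0 <= snd p /\ Rbar_lt (snd p) T.

(* C^n(R x [0,T)) : all partial derivatives of order <= n exist (time
   derivatives in the interior 0 < t < T) and extend continuously to
   R x [0,T). *)
Definition cont2 (T : Rbar) (f : R -> R -> R) : Prop :=
  forall x t, 0 <= t -> Rbar_lt t T ->
           filterlim (fun p : R * R => f (fst p) (snd p))
             (within (dom2 T) (locally (x, t))) (locally (f x t)).

Fixpoint Ck2 (n : nat) (T : Rbar) (f : R -> R -> R) : Prop :=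
  match n with
  | O => cont2 T f
  | S m => cont2 T f /\
      exists fx ft : R -> R -> R,
        (forall x t, 0 <= t -> Rbar_lt t T -> is_derive (fun y => f y t) x (fx x t)) /\
        (forall x t, 0 < t -> Rbar_lt t T -> is_derive (fun s => f x s) t (ft x t)) /\
        Ck2 m T fx /\ Ck2 m T ft
  end.

Definition smooth2 (T : Rbar) (f : R -> R -> R) : Prop := forall n, Ck2 n T f.

(* Main.v *)
Require Import Defs.
From Stdlib Require Import Reals Lra Lia ZArith ClassicalEpsilon Classical.
From Coquelicot Require Import Coquelicot.
Open Scope R_scope.

Lemma small_inv (e : R) : 0 < e -> exists k : nat, / INR (S k) < e.
Proof.
  intros He.
  destruct (archimed (/ e)) as [H1 _].
  assert (Hz : (0 <= up (/ e))%Z).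
  { apply le_IZR. assert (0 < / e) by (apply Rinv_0_lt_compat; lra). lra. }
  exists (Z.to_nat (up (/ e))).
  rewrite S_INR, INR_IZR_INZ, Z2Nat.id by exact Hz.
  assert (0 < / e) by (apply Rinv_0_lt_compat; lra).
  replace e with (/ / e) at 2 by (field; lra).
  apply Rinv_lt_contravar; nra.
Qed.

Lemma inv_S_le (m k : nat) : (k <= m)%nat -> / INR (S m) <= / INR (S k).
Proof.
  intros H. apply Rinv_le_contravar. apply lt_0_INR; lia. apply le_INR; lia.
Qed.

Lemma inv_S_pos (k : nat) : 0 < / INR (S k).
Proof. apply Rinv_0_lt_compat, lt_0_INR; lia. Qed.

Lemma subseq_conv (u : nat -> R) (a b : R) :
  (forall n, a <= u n <= b) ->
  exists (phi : nat -> nat) (l : R), a <= l <= b /\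
    (forall k, (k <= phi k)%nat) /\
    (forall k, Rabs (u (phi k) - l) < / INR (S k)).
Proof.
  intros Hu.
  destruct (Bolzano_Weierstrass u (fun c => a <= c <= b) (compact_P3 a b) Hu)
    as [l Hl].
  assert (H : forall N k : nat, exists p, (N <= p)%nat /\ Rabs (u p - l) < / INR (S k)).
  { intros N k.
    destruct (Hl (disc l (mkposreal _ (inv_S_pos k))) N) as [p [Hp1 Hp2]].
    { exists (mkposreal _ (inv_S_pos k)). intros z Hz. exact Hz. }
    exists p. split; auto. }
  pose (c := fun N k => proj1_sig (constructive_indefinite_description _ (H N k))).
  assert (Hc : forall N k, (N <= c N k)%nat /\ Rabs (u (c N k) - l) < / INR (S k)).
  { intros N k. unfold c. destruct (constructive_indefinite_description _ (H N k)); auto. }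
  pose (phi := fix phi k := match k with O => c O O | S k' => c (S (phi k')) (S k') end).
  assert (Hphi : forall k, (k <= phi k)%nat /\ Rabs (u (phi k) - l) < / INR (S k)).
  { induction k as [|k IH].
    - simpl. split; [lia|]. apply (Hc O O).
    - simpl. destruct (Hc (S (phi k)) (S k)) as [H1 H2]. split; [lia|]. exact H2. }
  exists phi, l. split; [|split; intros k; apply Hphi].
  split.
  - destruct (Rle_dec a l) as [?|Hn]; auto. exfalso.
    destruct (small_inv (a - l)) as [k Hk]; [lra|].
    destruct (Hphi k) as [_ H2]. specialize (Hu (phi k)).
    apply Rabs_def2 in H2. lra.
  - destruct (Rle_dec l b) as [?|Hn]; auto. exfalso.
    destruct (small_inv (l - b)) as [k Hk]; [lra|].
    destruct (Hphi k) as [_ H2]. specialize (Hu (phi k)).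
    apply Rabs_def2 in H2. lra.
Qed.

Lemma cluster3 (a1 b1 a2 b2 c d : R) (p q t : nat -> R) :
  (forall n, a1 <= p n <= b1 /\ a2 <= q n <= b2 /\ c <= t n <= d) ->
  exists P Q Tt, a1 <= P <= b1 /\ a2 <= Q <= b2 /\ c <= Tt <= d /\
    forall k : nat, exists n, (k <= n)%nat /\ Rabs (p n - P) < / INR (S k) /\
      Rabs (q n - Q) < / INR (S k) /\ Rabs (t n - Tt) < / INR (S k).
Proof.
  intros H.
  destruct (subseq_conv p a1 b1) as [f1 [P [HP [Hf1 Hp]]]]; [intros n; apply H|].
  destruct (subseq_conv (fun k => q (f1 k)) a2 b2) as [f2 [Q [HQ [Hf2 Hq]]]]; [intros n; apply H|].
  destruct (subseq_conv (fun k => t (f1 (f2 k))) c d) as [f3 [Tt [HT [Hf3 Ht]]]]; [intros n; apply H|].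
  exists P, Q, Tt. split; [auto|split;[auto|split;[auto|]]].
  intros k. exists (f1 (f2 (f3 k))).
  assert (k1 : (k <= f3 k)%nat) by apply Hf3.
  assert (k2 : (f3 k <= f2 (f3 k))%nat) by apply Hf2.
  assert (k3 : (f2 (f3 k) <= f1 (f2 (f3 k)))%nat) by apply Hf1.
  split; [lia|]. split; [|split].
  - eapply Rlt_le_trans; [apply Hp|apply inv_S_le; lia].
  - eapply Rlt_le_trans; [apply (Hq (f3 k))|apply inv_S_le; lia].
  - apply Ht.
Qed.

Definition inbox (a1 b1 a2 b2 c d x y t : R) : Prop :=
  a1 <= x <= b1 /\ a2 <= y <= b2 /\ c <= t <= d.

Definition bcont (F : R -> R -> R -> R) (a1 b1 a2 b2 c d : R) : Prop :=
  forall x y t, inbox a1 b1 a2 b2 c d x y t ->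
  forall eps, 0 < eps -> exists del, 0 < del /\
    forall x' y' t', inbox a1 b1 a2 b2 c d x' y' t' ->
      Rabs (x' - x) < del -> Rabs (y' - y) < del -> Rabs (t' - t) < del ->
      Rabs (F x' y' t' - F x y t) < eps.

Lemma nat_above (r : R) : exists k : nat, r < INR k.
Proof.
  destruct (Rle_lt_dec r 0) as [H|H].
  - exists 1%nat. simpl. lra.
  - destruct (small_inv (/ r)) as [k Hk]. apply Rinv_0_lt_compat; lra.
    exists (S k). assert (0 < INR (S k)) by (apply lt_0_INR; lia).
    replace r with (/ / r) by (field; lra).
    replace (INR (S k)) with (/ / INR (S k)) by (field; lra).
    apply Rinv_lt_contravar; [|exact Hk].
    apply Rmult_lt_0_compat; [apply inv_S_pos|apply Rinv_0_lt_compat; lra].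
Qed.

Lemma seq_choice3 (P : nat -> R -> R -> R -> Prop) :
  (forall n, exists x y t, P n x y t) ->
  exists p q t : nat -> R, forall n, P n (p n) (q n) (t n).
Proof.
  intros H.
  assert (H' : forall n, exists z : R * R * R, P n (fst (fst z)) (snd (fst z)) (snd z)).
  { intros n. destruct (H n) as [x [y [t Ht]]]. exists (x, y, t). exact Ht. }
  pose (f := fun n => proj1_sig (constructive_indefinite_description _ (H' n))).
  exists (fun n => fst (fst (f n))), (fun n => snd (fst (f n))), (fun n => snd (f n)).
  intros n. unfold f. destruct (constructive_indefinite_description _ (H' n)). exact p.
Qed.

Lemma bcont_bounded F a1 b1 a2 b2 c d :
  bcont F a1 b1 a2 b2 c d ->
  exists P, forall x y t, inbox a1 b1 a2 b2 c d x y t -> Rabs (F x y t) <= P.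
Proof.
  intros Hc.
  destruct (classic (exists P, forall x y t, inbox a1 b1 a2 b2 c d x y t -> Rabs (F x y t) <= P))
    as [H|H]; auto. exfalso.
  assert (Hs : forall n : nat, exists x y t, inbox a1 b1 a2 b2 c d x y t /\ INR n < Rabs (F x y t)).
  { intros n. apply NNPP. intros Hn. apply H. exists (INR n). intros x y t Hb.
    apply Rnot_lt_le. intros Hl. apply Hn. exists x, y, t. auto. }
  destruct (seq_choice3 _ Hs) as [p [q [t Hpqt]]].
  destruct (cluster3 a1 b1 a2 b2 c d p q t) as [X [Y [Tt [HX [HY [HT Hcl]]]]]].
  { intros n. apply Hpqt. }
  destruct (Hc X Y Tt (conj HX (conj HY HT)) 1 ltac:(lra)) as [del [Hdel Hd]].
  destruct (small_inv del Hdel) as [k1 Hk1].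
  destruct (nat_above (Rabs (F X Y Tt) + 1)) as [k2 Hk2].
  destruct (Hcl (Nat.max k1 k2)) as [n [Hn [H1 [H2 H3]]]].
  assert (/ INR (S (Nat.max k1 k2)) <= / INR (S k1)) by (apply inv_S_le; lia).
  assert (INR k2 <= INR n) by (apply le_INR; lia).
  destruct (Hpqt n) as [Hb Hbig].
  specialize (Hd (p n) (q n) (t n) Hb ltac:(lra) ltac:(lra) ltac:(lra)).
  pose proof (Rabs_triang_inv (F (p n) (q n) (t n)) (F X Y Tt)). lra.
Qed.

Lemma first_touch F a1 b1 a2 b2 t0 t1 :
  bcont F a1 b1 a2 b2 t0 t1 ->
  (forall x y, inbox a1 b1 a2 b2 t0 t1 x y t0 -> 0 < F x y t0) ->
  (forall x y t, inbox a1 b1 a2 b2 t0 t1 x y t -> 0 < F x y t) \/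
  exists xs ys ts, inbox a1 b1 a2 b2 t0 t1 xs ys ts /\ t0 < ts /\ F xs ys ts = 0 /\
    (forall x y, inbox a1 b1 a2 b2 t0 t1 x y ts -> 0 <= F x y ts) /\
    (forall t, t0 <= t < ts -> 0 < F xs ys t).
Proof.
  intros Hc H0.
  destruct (classic (exists x y t, inbox a1 b1 a2 b2 t0 t1 x y t /\ F x y t <= 0)) as [Hex|Hn].
  2:{ left. intros x y t Hb. apply Rnot_le_lt. intros Hl. apply Hn. exists x, y, t. auto. }
  right.
  pose (Ss := fun t => exists x y, inbox a1 b1 a2 b2 t0 t1 x y t /\ F x y t <= 0).
  pose (E := fun r => Ss (- r)).
  assert (HSb : forall t, Ss t -> t0 <= t <= t1).
  { intros t [x [y [[_ [_ Ht]] _]]]. exact Ht. }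
  assert (Hb : bound E).
  { exists (- t0). intros r Hr. apply HSb in Hr. lra. }
  assert (Hne : exists r, E r).
  { destruct Hex as [x [y [t Ht]]]. exists (- t). unfold E, Ss. rewrite Ropp_involutive.
    exists x, y. auto. }
  destruct (completeness E Hb Hne) as [m [Hub Hlub]].
  set (ts := - m).
  assert (Hi : forall t, Ss t -> ts <= t).
  { intros t Ht. assert (E (- t)) by (unfold E; rewrite Ropp_involutive; auto).
    specialize (Hub _ H). unfold ts. lra. }
  assert (Hii : forall e, 0 < e -> exists t, Ss t /\ t < ts + e).
  { intros e He. apply NNPP. intros Hn.
    assert (is_upper_bound E (m - e)).
    { intros r Hr. apply Rnot_lt_le. intros Hl. apply Hn. exists (- r). split; auto.
      unfold ts. lra. }
    specialize (Hlub _ H). lra. }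
  assert (Hts0 : t0 <= ts).
  { assert (is_upper_bound E (- t0)) by (intros r Hr; apply HSb in Hr; lra).
    specialize (Hlub _ H). unfold ts; lra. }
  assert (Hts1 : ts <= t1).
  { destruct Hex as [x [y [t Ht]]]. assert (Ss t) by (exists x, y; auto).
    pose proof (Hi _ H). pose proof (HSb _ H). lra. }
  assert (Hseq : forall n : nat, exists x y t, (inbox a1 b1 a2 b2 t0 t1 x y t /\ F x y t <= 0)
            /\ t < ts + / INR (S n)).
  { intros n. destruct (Hii (/ INR (S n)) (inv_S_pos n)) as [t [[x [y Hxy]] Ht]].
    exists x, y, t. auto. }
  destruct (seq_choice3 _ Hseq) as [p [q [t Hpqt]]].
  destruct (cluster3 a1 b1 a2 b2 t0 t1 p q t) as [X [Y [Tt [HX [HY [HT Hcl]]]]]].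
  { intros n. apply Hpqt. }
  assert (HTt : Tt = ts).
  { apply NNPP. intros Hne'.
    destruct (small_inv (Rabs (Tt - ts) / 2)) as [k Hk].
    { assert (0 < Rabs (Tt - ts)) by (apply Rabs_pos_lt; lra). lra. }
    destruct (Hcl k) as [n [Hn [_ [_ H3]]]].
    assert (/ INR (S n) <= / INR (S k)) by (apply inv_S_le; lia).
    destruct (Hpqt n) as [[Hbn _] Htn].
    assert (HS : Ss (t n)) by (exists (p n), (q n); apply Hpqt).
    pose proof (Hi _ HS) as Hge.
    pose proof (Rabs_triang (Tt - t n) (t n - ts)) as Htr.
    replace (Tt - t n + (t n - ts)) with (Tt - ts) in Htr by ring.
    rewrite Rabs_minus_sym in H3.
    assert (Rabs (t n - ts) < / INR (S k)) by (apply Rabs_def1; lra).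
    lra. }
  subst Tt.
  assert (HF : F X Y ts <= 0).
  { apply Rnot_lt_le. intros Hpos.
    destruct (Hc X Y ts (conj HX (conj HY HT)) _ Hpos) as [del [Hdel Hd]].
    destruct (small_inv del Hdel) as [k Hk].
    destruct (Hcl k) as [n [Hn [H1 [H2 H3]]]].
    destruct (Hpqt n) as [[Hbn HFn] _].
    specialize (Hd _ _ _ Hbn ltac:(lra) ltac:(lra) ltac:(lra)).
    apply Rabs_def2 in Hd. lra. }
  clear Hpqt Hcl.
  assert (Hbefore : forall x y t, inbox a1 b1 a2 b2 t0 t1 x y t -> t < ts -> 0 < F x y t).
  { clear t. intros x y t Hbx Ht. apply Rnot_le_lt. intros Hl.
    assert (Ss t) by (exists x, y; auto). apply Hi in H. lra. }
  assert (Hat : forall x y, inbox a1 b1 a2 b2 t0 t1 x y ts -> 0 <= F x y ts).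
  { intros x y Hbx. apply Rnot_lt_le. intros Hneg.
    destruct (Req_dec ts t0) as [Heq|Hneq].
    - rewrite Heq in Hneg. destruct Hbx as [h1 [h2 _]].
      assert (Hb1 : inbox a1 b1 a2 b2 t0 t1 x y t0) by (repeat split; lra).
      specialize (H0 x y Hb1). lra.
    - destruct (Hc x y ts Hbx (- F x y ts) ltac:(lra)) as [del [Hdel Hd]].
      set (t' := Rmax t0 (ts - del / 2)).
      assert (t0 <= t' < ts).
      { unfold t'. split; [apply Rmax_l|]. apply Rmax_lub_lt; lra. }
      assert (Rabs (t' - ts) < del).
      { apply Rabs_def1; unfold t'.
        - apply Rle_lt_trans with 0. pose proof (Rmax_l t0 (ts - del/2)). 
          destruct (Rle_lt_dec t0 (ts - del/2)); [rewrite Rmax_right by lra|rewrite Rmax_left by lra]; lra. lra.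
        - pose proof (Rmax_r t0 (ts - del / 2)). lra. }
      destruct Hbx as [h1 [h2 h3]].
      assert (Hb' : inbox a1 b1 a2 b2 t0 t1 x y t') by (repeat split; lra).
      specialize (Hd x y t' Hb' ltac:(rewrite Rminus_diag, Rabs_R0; lra)
                   ltac:(rewrite Rminus_diag, Rabs_R0; lra) H1).
      specialize (Hbefore x y t' Hb' ltac:(lra)).
      apply Rabs_def2 in Hd. lra. }
  exists X, Y, ts.
  assert (Hb0 : inbox a1 b1 a2 b2 t0 t1 X Y ts) by (repeat split; lra).
  split; [exact Hb0|].
  split.
  { destruct (Req_dec ts t0) as [Heq|Hneq]; [|lra].
    exfalso. rewrite Heq in HF.
    assert (Hb1 : inbox a1 b1 a2 b2 t0 t1 X Y t0) by (repeat split; lra).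
    specialize (H0 X Y Hb1). lra. }
  split; [specialize (Hat X Y Hb0); lra|].
  split; [exact Hat|].
  intros t' Ht'. apply Hbefore; [repeat split; lra|lra].
Qed.

Lemma ball_R (x y e : R) : ball x e y <-> Rabs (y - x) < e.
Proof. unfold ball; simpl; unfold AbsRing_ball, abs, minus, plus, opp; simpl. tauto. Qed.

Lemma gen_minf (f : R -> R) c l :
  is_RInt_gen f (Rbar_locally m_infty) (at_point c) l ->
  forall e, 0 < e -> exists A, forall a, a < A -> exists v, is_RInt f a c v /\ Rabs (v - l) < e.
Proof.
  intros H e He.
  specialize (H (ball l (mkposreal e He)) (locally_ball l (mkposreal e He))).
  destruct H as [Q R0 HQ HR HP].
  simpl in HQ. destruct HQ as [A HA]. exists A. intros a Ha.
  destruct (HP a c (HA a Ha) HR) as [v [Hv1 Hv2]].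
  exists v. split; [exact Hv1|]. apply ball_R in Hv2. exact Hv2.
Qed.

Lemma gen_pinf (f : R -> R) c l :
  is_RInt_gen f (at_point c) (Rbar_locally p_infty) l ->
  forall e, 0 < e -> exists B, forall b, B < b -> exists v, is_RInt f c b v /\ Rabs (v - l) < e.
Proof.
  intros H e He.
  specialize (H (ball l (mkposreal e He)) (locally_ball l (mkposreal e He))).
  destruct H as [Q R0 HQ HR HP].
  simpl in HR. destruct HR as [B HB]. exists B. intros b Hb.
  destruct (HP c b HQ (HB b Hb)) as [v [Hv1 Hv2]].
  exists v. split; [exact Hv1|]. apply ball_R in Hv2. exact Hv2.
Qed.

Lemma at_right_eps (f : R -> R) h :
  filterlim f (at_right 0) (locally h) ->
  forall e, 0 < e -> exists d, 0 < d /\ forall x, 0 < x < d -> Rabs (f x - h) < e.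
Proof.
  intros H e He.
  specialize (H (ball h (mkposreal e He)) (locally_ball h (mkposreal e He))).
  destruct H as [d Hd]. exists d. split; [apply cond_pos|].
  intros x Hx. apply ball_R. apply Hd; [|lra].
  apply ball_R. rewrite Rminus_0_r, Rabs_pos_eq; lra.
Qed.

Lemma Ka_odd a y : Ka a (- y) = - Ka a y.
Proof.
  unfold Ka. replace ((- y) ^ 2) with (y ^ 2) by ring.
  replace (PI * - y * (y ^ 2 + a ^ 2)) with (- (PI * y * (y ^ 2 + a ^ 2))) by ring.
  unfold Rdiv. rewrite Rinv_opp. ring.
Qed.

Lemma Ka_pos a y : 0 < a -> 0 < y -> 0 < Ka a y.
Proof.
  intros Ha Hy. unfold Ka. pose proof PI_RGT_0.
  apply Rdiv_lt_0_compat; [nra|]. apply Rmult_lt_0_compat; [nra|nra].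
Qed.

Lemma Ka_yle a y : 0 < a -> 0 < y -> y * Ka a y <= / PI.
Proof.
  intros Ha Hy. unfold Ka. pose proof PI_RGT_0.
  replace (y * (a ^ 2 / (PI * y * (y ^ 2 + a ^ 2)))) with (/ PI * (a^2 / (y^2 + a^2)))
    by (field; split; nra).
  rewrite <- (Rmult_1_r (/ PI)) at 2. apply Rmult_le_compat_l.
  - left; apply Rinv_0_lt_compat; lra.
  - apply Rcomplements.Rle_div_l; nra.
Qed.

Definition Gp (a y : R) := - (1 / (2 * PI)) * ln (1 + a ^ 2 / y ^ 2).

Lemma Gp_derive a y : 0 < a -> 0 < y -> is_derive (Gp a) y (Ka a y).
Proof.
  intros Ha Hy. unfold Gp, Ka. pose proof PI_RGT_0.
  auto_derive.
  - split; [nra|split;[|auto]].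
    assert (0 <= a * (a * 1) * / (y * (y * 1))).
    { apply Rmult_le_pos; [nra|]. left; apply Rinv_0_lt_compat; nra. }
    lra.
  - field. repeat split; nra.
Qed.

Lemma Gp_nonpos a y : 0 < y -> Gp a y <= 0.
Proof.
  intros Hy. unfold Gp. pose proof PI_RGT_0.
  assert (0 <= a ^ 2 / y ^ 2).
  { apply Rmult_le_pos; [nra|]. left; apply Rinv_0_lt_compat; nra. }
  assert (0 <= ln (1 + a ^ 2 / y ^ 2)) by (rewrite <- ln_1; apply ln_le; lra).
  assert (0 < 1 / (2 * PI)) by (apply Rdiv_lt_0_compat; lra).
  nra.
Qed.

Lemma Ka_cont a y : 0 < a -> 0 < y -> continuous (Ka a) y.
Proof.
  intros Ha Hy. pose proof PI_RGT_0.
  apply (ex_derive_continuous (V := R_NormedModule)). unfold Ka. auto_derive. apply Rgt_not_eq. apply Rmult_lt_0_compat; [apply Rmult_lt_0_compat|]; nra.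
Qed.

Lemma fin_bound a (E : R -> R) x M m del eps b v :
  0 < a -> 0 < eps -> eps <= del -> del <= b -> 0 <= M -> 0 <= m ->
  (forall z, Rabs (E z) <= m) ->
  (forall z w, Rabs (E z - E w) <= M * Rabs (z - w)) ->
  is_RInt (fun y => (E (x - y) - E (x + y)) * Ka a y) eps b v ->
  Rabs v <= 2 * M * del / PI + m / PI * ln (1 + a ^ 2 / del ^ 2).
Proof.
  intros Ha He Hed Hdb HM Hm HE HL Hv.
  pose proof PI_RGT_0 as HPI.
  set (gf := fun y => (E (x - y) - E (x + y)) * Ka a y) in *.
  assert (Hex : ex_RInt gf eps b) by (exists v; exact Hv).
  assert (Hex1 : ex_RInt gf eps del) by (apply (ex_RInt_Chasles_1 (V:=R_CompleteNormedModule) _ _ _ b); [lra|exact Hex]).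
  assert (Hex2 : ex_RInt gf del b) by (apply (ex_RInt_Chasles_2 (V:=R_CompleteNormedModule) _ eps); [lra|exact Hex]).
  pose proof (is_RInt_Chasles _ _ _ _ _ _ (RInt_correct _ _ _ Hex1) (RInt_correct _ _ _ Hex2)) as HC.
  apply (is_RInt_unique (V:=R_CompleteNormedModule)) in HC. apply (is_RInt_unique (V:=R_CompleteNormedModule)) in Hv. rewrite Hv in HC.
  rewrite HC. clear HC.
  set (v1 := RInt gf eps del). set (v2 := RInt gf del b).
  assert (B1 : Rabs v1 <= (del - eps) * (2 * M / PI)).
  { apply (norm_RInt_le gf (fun _ => 2 * M / PI) eps del v1 (scal (del - eps) (2 * M / PI))).
    - lra.
    - intros y Hy. change (norm (gf y)) with (Rabs (gf y)). unfold gf.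
      rewrite Rabs_mult. rewrite (Rabs_pos_eq (Ka a y)) by (left; apply Ka_pos; lra).
      specialize (HL (x - y) (x + y)).
      replace (x - y - (x + y)) with (- (2 * y)) in HL by ring.
      rewrite Rabs_Ropp, (Rabs_pos_eq (2 * y)) in HL by lra.
      pose proof (Ka_yle a y Ha ltac:(lra)). pose proof (Ka_pos a y Ha ltac:(lra)).
      apply Rle_trans with (M * (2 * y) * Ka a y).
      + apply Rmult_le_compat_r; lra.
      + replace (M * (2 * y) * Ka a y) with (2 * M * (y * Ka a y)) by ring.
        unfold Rdiv. apply Rmult_le_compat_l; lra.
    - apply (RInt_correct (V:=R_CompleteNormedModule)); exact Hex1.
    - apply (is_RInt_const (V:=R_NormedModule)). }
  assert (Hg2 : is_RInt (fun y => 2 * m * Ka a y) del b (2 * m * Gp a b - 2 * m * Gp a del)).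
  { apply (is_RInt_derive (fun y => 2 * m * Gp a y) (fun y => 2 * m * Ka a y)).
    - intros y Hy. rewrite Rmin_left, Rmax_right in Hy by lra.
      apply (is_derive_scal (fun y => Gp a y)). apply Gp_derive; lra.
    - intros y Hy. rewrite Rmin_left, Rmax_right in Hy by lra.
      apply (ex_derive_continuous (V := R_NormedModule)).
      unfold Ka. auto_derive. apply Rgt_not_eq. apply Rmult_lt_0_compat; [apply Rmult_lt_0_compat|]; nra. }
  assert (B2 : Rabs v2 <= 2 * m * Gp a b - 2 * m * Gp a del).
  { apply (norm_RInt_le gf (fun y => 2 * m * Ka a y) del b v2 _); [lra| |apply (RInt_correct (V:=R_CompleteNormedModule)); exact Hex2|exact Hg2].
    intros y Hy. change (norm (gf y)) with (Rabs (gf y)). unfold gf.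
    rewrite Rabs_mult. rewrite (Rabs_pos_eq (Ka a y)) by (left; apply Ka_pos; lra).
    pose proof (Ka_pos a y Ha ltac:(lra)).
    assert (Rabs (E (x - y) - E (x + y)) <= 2 * m).
    { pose proof (HE (x - y)) as h1. pose proof (HE (x + y)) as h2.
      set (e1 := E (x - y)) in *. set (e2 := E (x + y)) in *.
      pose proof (Rabs_triang e1 (- e2)) as h3. rewrite Rabs_Ropp in h3. unfold Rminus. lra. }
    apply Rmult_le_compat_r; lra. }
  pose proof (Gp_nonpos a b ltac:(lra)).
  assert (Gp a del = - (1 / (2 * PI)) * ln (1 + a ^ 2 / del ^ 2)) by reflexivity.
  assert (m * Gp a b <= 0) by nra.
  pose proof (Rabs_triang v1 v2).
  change (plus v1 v2) with (v1 + v2).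
  assert (2 * m * Gp a b - 2 * m * Gp a del <= m / PI * ln (1 + a ^ 2 / del ^ 2)).
  { rewrite H0. set (L := ln (1 + a ^ 2 / del ^ 2)).
    assert (2 * m * (- (1 / (2 * PI)) * L) = - (m / PI * L)) by (field; lra).
    lra. }
  assert ((del - eps) * (2 * M / PI) <= 2 * M * del / PI).
  { unfold Rdiv. assert (0 <= 2 * M * / PI) by (apply Rmult_le_pos; [lra|left; apply Rinv_0_lt_compat; lra]).
    nra. }
  lra.
Qed.

Lemma Ha_bound a (f : R -> R) x h1 h2 M m del :
  0 < a -> 0 < del -> 0 <= M -> 0 <= m ->
  is_Ha a f x h1 -> is_Ha a f (- x) h2 ->
  (forall z, Rabs (f z - f (- z)) <= m) ->
  (forall z w, Rabs ((f z - f (- z)) - (f w - f (- w))) <= M * Rabs (z - w)) ->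
  Rabs (h1 + h2) <= 2 * M * del / PI + m / PI * ln (1 + a ^ 2 / del ^ 2).
Proof.
  intros Ha Hdel HM Hm [I1 [I2 [HI Hl1]]] [J1 [J2 [HJ Hl2]]] HE HL.
  apply Rle_plus_epsilon. intros e He.
  destruct (at_right_eps _ _ Hl1 (e / 6)) as [d1 [Hd1 Hd1']]; [lra|].
  destruct (at_right_eps _ _ Hl2 (e / 6)) as [d2 [Hd2 Hd2']]; [lra|].
  set (eps := Rmin (Rmin d1 d2) del / 2).
  assert (Heps : 0 < eps /\ eps < d1 /\ eps < d2 /\ eps <= del).
  { unfold eps. pose proof (Rmin_l (Rmin d1 d2) del). pose proof (Rmin_r (Rmin d1 d2) del).
    pose proof (Rmin_l d1 d2). pose proof (Rmin_r d1 d2).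
    assert (0 < Rmin (Rmin d1 d2) del) by (repeat apply Rmin_glb_lt; lra). lra. }
  destruct Heps as [He0 [He1 [He2 He3]]].
  specialize (Hd1' eps (conj He0 He1)). specialize (Hd2' eps (conj He0 He2)).
  destruct (HI eps He0) as [HI1 HI2]. destruct (HJ eps He0) as [HJ1 HJ2].
  destruct (gen_minf _ _ _ HI1 (e / 6)) as [A1 HA1]; [lra|].
  destruct (gen_pinf _ _ _ HI2 (e / 6)) as [B1 HB1]; [lra|].
  destruct (gen_minf _ _ _ HJ1 (e / 6)) as [A2 HA2]; [lra|].
  destruct (gen_pinf _ _ _ HJ2 (e / 6)) as [B2 HB2]; [lra|].
  set (b := 1 + Rmax (Rmax del (Rmax (- A1) (- A2))) (Rmax B1 B2)).
  assert (Hb : del < b /\ - b < A1 /\ - b < A2 /\ B1 < b /\ B2 < b).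
  { unfold b. pose proof (Rmax_l (Rmax del (Rmax (- A1) (- A2))) (Rmax B1 B2)).
    pose proof (Rmax_r (Rmax del (Rmax (- A1) (- A2))) (Rmax B1 B2)).
    pose proof (Rmax_l del (Rmax (- A1) (- A2))). pose proof (Rmax_r del (Rmax (- A1) (- A2))).
    pose proof (Rmax_l (- A1) (- A2)). pose proof (Rmax_r (- A1) (- A2)).
    pose proof (Rmax_l B1 B2). pose proof (Rmax_r B1 B2). lra. }
  destruct Hb as [Hb0 [Hb1 [Hb2 [Hb3 Hb4]]]].
  destruct (HA1 (- b) Hb1) as [v1 [Hv1 Ev1]].
  destruct (HB1 b Hb3) as [v2 [Hv2 Ev2]].
  destruct (HA2 (- b) Hb2) as [w1 [Hw1 Ew1]].
  destruct (HB2 b Hb4) as [w2 [Hw2 Ew2]].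
  pose proof (is_RInt_swap _ _ _ _ (is_RInt_comp_opp _ b eps v1 Hv1)) as P1.
  pose proof (is_RInt_swap _ _ _ _ (is_RInt_comp_opp _ b eps w1 Hw1)) as P2.
  pose proof (is_RInt_minus _ _ _ _ _ _ (is_RInt_plus _ _ _ _ _ _ (is_RInt_minus _ _ _ _ _ _ Hv2 P1) Hw2) P2) as Hg.
  assert (Hval : Rabs (v1 + v2 + w1 + w2) <= 2 * M * del / PI + m / PI * ln (1 + a ^ 2 / del ^ 2)).
  { apply (fin_bound a (fun z => f z - f (- z)) x M m del eps b); auto; [lra|].
    replace (v1 + v2 + w1 + w2) with (minus (plus (minus v2 (opp v1)) w2) (opp w1))
      by (unfold minus, plus, opp; simpl; ring).
    eapply is_RInt_ext; [|exact Hg].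
    intros y _. cbv beta. unfold minus, plus, opp; simpl.
    rewrite !Ka_odd.
    replace (x - - y) with (x + y) by ring.
    replace (- x - - y) with (- (x - y)) by ring.
    replace (- x - y) with (- (x + y)) by ring.
    ring. }
  apply Rabs_le_between in Hval.
  apply Rabs_def2 in Hd1'. apply Rabs_def2 in Hd2'.
  apply Rabs_def2 in Ev1. apply Rabs_def2 in Ev2. apply Rabs_def2 in Ew1. apply Rabs_def2 in Ew2.
  apply Rabs_le. lra.
Qed.

Lemma cont2_eps (T : Rbar) (f : R -> R -> R) (x t : R) :
  cont2 T f -> 0 <= t -> Rbar_lt t T ->
  forall eps, 0 < eps -> exists del, 0 < del /\ forall x' t', 0 <= t' -> Rbar_lt t' T ->
    Rabs (x' - x) < del -> Rabs (t' - t) < del -> Rabs (f x' t' - f x t) < eps.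
Proof.
  intros H H0 H1 eps He. specialize (H x t H0 H1).
  apply filterlim_locally with (eps := mkposreal eps He) in H.
  unfold within in H. destruct H as [d Hd]. exists d. split; [apply cond_pos|].
  intros x' t' Ht0 HtT Hx Ht. specialize (Hd (x', t')).
  unfold ball in Hd; simpl in Hd. unfold prod_ball in Hd. simpl in Hd.
  assert (Hb : AbsRing_ball R_AbsRing (f x t) eps (f x' t')).
  { apply Hd; [split|split; auto]; apply ball_R; auto. }
  apply ball_R in Hb. exact Hb.
Qed.

Lemma bcont_const c a1 b1 a2 b2 t0 t1 : bcont (fun _ _ _ => c) a1 b1 a2 b2 t0 t1.
Proof. intros x y t _ eps He. exists 1. split; [lra|]. intros. rewrite Rminus_diag, Rabs_R0. lra. Qed.

Lemma bcont_x a1 b1 a2 b2 t0 t1 : bcont (fun x _ _ => x) a1 b1 a2 b2 t0 t1.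
Proof. intros x y t _ eps He. exists eps. split; [lra|]. intros. auto. Qed.

Lemma bcont_y a1 b1 a2 b2 t0 t1 : bcont (fun _ y _ => y) a1 b1 a2 b2 t0 t1.
Proof. intros x y t _ eps He. exists eps. split; [lra|]. intros. auto. Qed.

Lemma bcont_t a1 b1 a2 b2 t0 t1 : bcont (fun _ _ t => t) a1 b1 a2 b2 t0 t1.
Proof. intros x y t _ eps He. exists eps. split; [lra|]. intros. auto. Qed.

Lemma bcont_plus F G a1 b1 a2 b2 t0 t1 :
  bcont F a1 b1 a2 b2 t0 t1 -> bcont G a1 b1 a2 b2 t0 t1 ->
  bcont (fun x y t => F x y t + G x y t) a1 b1 a2 b2 t0 t1.
Proof.
  intros HF HG x y t Hb eps He.
  destruct (HF x y t Hb (eps/2)) as [d1 [Hd1 H1]]; [lra|].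
  destruct (HG x y t Hb (eps/2)) as [d2 [Hd2 H2]]; [lra|].
  exists (Rmin d1 d2). split; [apply Rmin_glb_lt; lra|].
  intros x' y' t' Hb' Hx Hy Ht.
  pose proof (Rmin_l d1 d2). pose proof (Rmin_r d1 d2).
  specialize (H1 x' y' t' Hb' ltac:(lra) ltac:(lra) ltac:(lra)).
  specialize (H2 x' y' t' Hb' ltac:(lra) ltac:(lra) ltac:(lra)).
  replace (F x' y' t' + G x' y' t' - (F x y t + G x y t)) with
    ((F x' y' t' - F x y t) + (G x' y' t' - G x y t)) by ring.
  pose proof (Rabs_triang (F x' y' t' - F x y t) (G x' y' t' - G x y t)). lra.
Qed.

Lemma bcont_opp F a1 b1 a2 b2 t0 t1 :
  bcont F a1 b1 a2 b2 t0 t1 -> bcont (fun x y t => - F x y t) a1 b1 a2 b2 t0 t1.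
Proof.
  intros HF x y t Hb eps He.
  destruct (HF x y t Hb eps He) as [d [Hd H1]]. exists d. split; auto.
  intros. replace (- F x' y' t' - - F x y t) with (- (F x' y' t' - F x y t)) by ring.
  rewrite Rabs_Ropp. auto.
Qed.

Lemma bcont_mult F G a1 b1 a2 b2 t0 t1 :
  bcont F a1 b1 a2 b2 t0 t1 -> bcont G a1 b1 a2 b2 t0 t1 ->
  bcont (fun x y t => F x y t * G x y t) a1 b1 a2 b2 t0 t1.
Proof.
  intros HF HG x y t Hb eps He.
  set (u := F x y t). set (v := G x y t).
  assert (Hu : 0 < Rabs u + 1) by (pose proof (Rabs_pos u); lra).
  assert (Hv : 0 < Rabs v + 1) by (pose proof (Rabs_pos v); lra).
  destruct (HF x y t Hb (Rmin 1 (eps / (2 * (Rabs v + 1))))) as [d1 [Hd1 H1]].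
  { apply Rmin_glb_lt; [lra|]. apply Rdiv_lt_0_compat; lra. }
  destruct (HG x y t Hb (eps / (2 * (Rabs u + 1)))) as [d2 [Hd2 H2]].
  { apply Rdiv_lt_0_compat; lra. }
  exists (Rmin d1 d2). split; [apply Rmin_glb_lt; lra|].
  intros x' y' t' Hb' Hx Hy Ht.
  pose proof (Rmin_l d1 d2). pose proof (Rmin_r d1 d2).
  specialize (H1 x' y' t' Hb' ltac:(lra) ltac:(lra) ltac:(lra)).
  specialize (H2 x' y' t' Hb' ltac:(lra) ltac:(lra) ltac:(lra)).
  fold u v in H1, H2 |- *.
  set (u' := F x' y' t') in *. set (v' := G x' y' t') in *.
  pose proof (Rmin_l 1 (eps / (2 * (Rabs v + 1)))).
  pose proof (Rmin_r 1 (eps / (2 * (Rabs v + 1)))).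
  replace (u' * v' - u * v) with (u' * (v' - v) + v * (u' - u)) by ring.
  pose proof (Rabs_triang (u' * (v' - v)) (v * (u' - u))).
  rewrite !Rabs_mult in H5.
  assert (Rabs u' <= Rabs u + 1).
  { pose proof (Rabs_triang_inv u' u). lra. }
  assert (Rabs u' * Rabs (v' - v) <= (Rabs u + 1) * (eps / (2 * (Rabs u + 1)))).
  { apply Rmult_le_compat; try apply Rabs_pos; lra. }
  assert (Rabs v * Rabs (u' - u) <= (Rabs v + 1) * (eps / (2 * (Rabs v + 1)))).
  { apply Rmult_le_compat; try apply Rabs_pos; lra. }
  replace ((Rabs u + 1) * (eps / (2 * (Rabs u + 1)))) with (eps / 2) in H7 by (field; lra).
  replace ((Rabs v + 1) * (eps / (2 * (Rabs v + 1)))) with (eps / 2) in H8 by (field; lra).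
  assert (Rabs v * Rabs (u' - u) < (Rabs v + 1) * (eps / (2 * (Rabs v + 1))) \/
          Rabs u' * Rabs (v' - v) < (Rabs u + 1) * (eps / (2 * (Rabs u + 1)))).
  { right. apply Rle_lt_trans with (Rabs u' * (eps / (2 * (Rabs u + 1)))).
    - apply Rmult_le_compat_l; [apply Rabs_pos|lra].
    - apply Rmult_lt_compat_r; [apply Rdiv_lt_0_compat; lra|].
      pose proof (Rabs_triang_inv u' u). 
      assert (Rabs (u' - u) < 1) by lra. lra. }
  replace ((Rabs u + 1) * (eps / (2 * (Rabs u + 1)))) with (eps / 2) in H9 by (field; lra).
  replace ((Rabs v + 1) * (eps / (2 * (Rabs v + 1)))) with (eps / 2) in H9 by (field; lra).
  lra.
Qed.

Lemma bcont_comp1 (phi : R -> R) F a1 b1 a2 b2 t0 t1 :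
  (forall z, ex_derive phi z) -> bcont F a1 b1 a2 b2 t0 t1 ->
  bcont (fun x y t => phi (F x y t)) a1 b1 a2 b2 t0 t1.
Proof.
  intros Hphi HF x y t Hb eps He.
  pose proof (ex_derive_continuous (V := R_NormedModule) phi (F x y t) (Hphi _)) as Hc.
  apply filterlim_locally with (eps := mkposreal eps He) in Hc.
  destruct Hc as [d1 Hd1].
  destruct (HF x y t Hb d1 (cond_pos d1)) as [d [Hd H]].
  exists d. split; auto. intros x' y' t' Hb' Hx Hy Ht.
  specialize (Hd1 (F x' y' t')). apply ball_R. apply Hd1. apply ball_R. auto.
Qed.

Lemma bcont_rho (T : Rbar) (f : R -> R -> R) X (a1 b1 a2 b2 t0 t1 : R) :
  cont2 T f -> 0 <= t0 -> Rbar_lt t1 T ->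
  bcont X a1 b1 a2 b2 t0 t1 ->
  bcont (fun x y t => f (X x y t) t) a1 b1 a2 b2 t0 t1.
Proof.
  intros Hf H0 H1 HX x y t Hb eps He.
  assert (Htt : 0 <= t /\ Rbar_lt t T).
  { destruct Hb as [_ [_ Ht]]. split; [lra|]. eapply Rbar_le_lt_trans; [|exact H1]. simpl. lra. }
  destruct (cont2_eps T f (X x y t) t Hf (proj1 Htt) (proj2 Htt) eps He) as [d1 [Hd1 H1']].
  destruct (HX x y t Hb d1 Hd1) as [d2 [Hd2 H2]].
  exists (Rmin d1 d2). split; [apply Rmin_glb_lt; lra|].
  intros x' y' t' Hb' Hx Hy Ht.
  pose proof (Rmin_l d1 d2). pose proof (Rmin_r d1 d2).
  assert (Htt' : 0 <= t' /\ Rbar_lt t' T).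
  { destruct Hb' as [_ [_ Ht']]. split; [lra|]. eapply Rbar_le_lt_trans; [|exact H1]. simpl. lra. }
  apply H1'; try tauto; [|lra].
  apply H2; auto; lra.
Qed.

Lemma deriv_right_ge (f : R -> R) x l d :
  is_derive f x l -> 0 < d -> (forall h, 0 < h < d -> f x <= f (x + h)) -> 0 <= l.
Proof.
  intros Hd Hd0 Hm. apply is_derive_Reals in Hd.
  apply Rnot_lt_le. intros Hl.
  destruct (Hd (- l / 2) ltac:(lra)) as [del Hdel].
  set (h := Rmin del d / 2).
  assert (0 < Rmin del d) by (apply Rmin_glb_lt; [apply cond_pos|lra]).
  pose proof (Rmin_l del d). pose proof (Rmin_r del d).
  assert (Hh : 0 < h < d) by (unfold h; lra).
  specialize (Hdel h ltac:(lra) ltac:(rewrite Rabs_pos_eq by lra; unfold h; lra)).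
  specialize (Hm h Hh).
  apply Rabs_def2 in Hdel.
  assert ((f (x + h) - f x) / h * h = f (x + h) - f x) by (field; lra).
  nra.
Qed.

Lemma deriv_left_le (f : R -> R) x l d :
  is_derive f x l -> 0 < d -> (forall h, 0 < h < d -> f x <= f (x - h)) -> l <= 0.
Proof.
  intros Hd Hd0 Hm. apply is_derive_Reals in Hd.
  apply Rnot_lt_le. intros Hl.
  destruct (Hd (l / 2) ltac:(lra)) as [del Hdel].
  set (h := Rmin del d / 2).
  assert (0 < Rmin del d) by (apply Rmin_glb_lt; [apply cond_pos|lra]).
  pose proof (Rmin_l del d). pose proof (Rmin_r del d).
  assert (Hh : 0 < h < d) by (unfold h; lra).
  specialize (Hdel (- h) ltac:(lra) ltac:(rewrite Rabs_Ropp, Rabs_pos_eq by lra; unfold h; lra)).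
  specialize (Hm h Hh). replace (x - h) with (x + - h) in Hm by ring.
  apply Rabs_def2 in Hdel.
  assert ((f (x + - h) - f x) / - h * - h = f (x + - h) - f x) by (field; lra).
  nra.
Qed.

Lemma deriv_min (f : R -> R) x l d :
  is_derive f x l -> 0 < d -> (forall h, Rabs h < d -> f x <= f (x + h)) -> l = 0.
Proof.
  intros Hd Hd0 Hm.
  assert (0 <= l).
  { apply (deriv_right_ge f x l d Hd Hd0). intros h Hh. apply Hm. rewrite Rabs_pos_eq; lra. }
  assert (l <= 0).
  { apply (deriv_left_le f x l d Hd Hd0). intros h Hh. replace (x - h) with (x + - h) by ring.
    apply Hm. rewrite Rabs_Ropp, Rabs_pos_eq; lra. }
  lra.
Qed.

Lemma deriv_sym (f : R -> R) c l :
  (forall y, f (c - y) = f y) -> is_derive f (c / 2) l -> l = 0.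
Proof.
  intros Hs Hd.
  assert (Hd2 : is_derive (fun y => f (c - y)) (c / 2) (- l)).
  { replace (- l) with ((-1) * l) by ring.
    apply (is_derive_comp f (fun y => c - y) (c / 2) l (-1)).
    - replace (c - c / 2) with (c / 2) by field. exact Hd.
    - auto_derive; auto. }
  assert (Hd3 : is_derive f (c / 2) (- l)).
  { eapply is_derive_ext; [|exact Hd2]. intros y. simpl. apply Hs. }
  pose proof (is_derive_unique _ _ _ Hd) as U1.
  pose proof (is_derive_unique _ _ _ Hd3) as U2.
  rewrite U1 in U2. lra.
Qed.

Lemma lip_mvt (f df : R -> R) M :
  (forall z, is_derive f z (df z)) -> (forall z, Rabs (df z) <= M) ->
  forall z w, Rabs (f z - f w) <= M * Rabs (z - w).
Proof.
  intros Hd Hb z w.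
  destruct (MVT_gen f w z df) as [c [Hc Heq]].
  - intros; apply Hd.
  - intros y _. apply continuity_pt_filterlim.
    apply (ex_derive_continuous (V := R_NormedModule)). exists (df y). apply Hd.
  - rewrite Heq, Rabs_mult. apply Rmult_le_compat_r; [apply Rabs_pos|apply Hb].
Qed.

Lemma periodic_nat (f : R -> R) : periodic f -> forall n x, f (x + 2 * PI * INR n) = f x.
Proof.
  intros Hp n. induction n as [|n IH]; intros x.
  - simpl. f_equal. ring.
  - rewrite S_INR. replace (x + 2 * PI * (INR n + 1)) with ((x + 2 * PI * INR n) + 2 * PI) by ring.
    rewrite Hp. apply IH.
Qed.

Lemma periodic_Z (f : R -> R) : periodic f -> forall z x, f (x + 2 * PI * IZR z) = f x.
Proof.
  intros Hp z x. destruct (Z_le_gt_dec 0 z) as [Hz|Hz].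
  - rewrite <- (Z2Nat.id z Hz), <- INR_IZR_INZ. apply periodic_nat; auto.
  - assert (Hz' : (0 <= - z)%Z) by lia.
    pose proof (periodic_nat f Hp (Z.to_nat (- z)) (x + 2 * PI * IZR z)) as H.
    rewrite INR_IZR_INZ, Z2Nat.id in H by exact Hz'.
    rewrite opp_IZR in H. replace (x + 2 * PI * IZR z + 2 * PI * - IZR z) with x in H by ring.
    auto.
Qed.

Lemma periodic_reduce (f : R -> R) : periodic f ->
  forall x, exists x', - PI <= x' <= PI /\ f x = f x'.
Proof.
  intros Hp x. pose proof PI_RGT_0.
  destruct (archimed ((x + PI) / (2 * PI))) as [H1 H2].
  set (z := (up ((x + PI) / (2 * PI)) - 1)%Z).
  exists (x + 2 * PI * IZR (- z)). split.
  - rewrite opp_IZR. unfold z. rewrite minus_IZR. simpl.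
    set (u := IZR (up ((x + PI) / (2 * PI)))) in *.
    assert (Hq : (x + PI) / (2 * PI) * (2 * PI) = x + PI) by (field; lra).
    split; nra.
  - rewrite periodic_Z; auto.
Qed.

Lemma der_eq (f : R -> R) x l l' : is_derive f x l -> l = l' -> is_derive f x l'.
Proof. intros H <-. exact H. Qed.

Lemma der_minus (f g : R -> R) x df dg :
  is_derive f x df -> is_derive g x dg -> is_derive (fun y => f y - g y) x (df - dg).
Proof. intros H1 H2. apply (is_derive_minus f g x df dg H1 H2). Qed.

Lemma der_sq (f : R -> R) x df :
  is_derive f x df -> is_derive (fun y => f y * f y) x (2 * f x * df).
Proof.
  intros H. eapply der_eq.
  - apply (is_derive_mult f f x df df H H). intros; apply Rmult_comm.
  - unfold plus, mult; simpl. ring.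
Qed.

Lemma der_comp_lin (f : R -> R) (s c x l : R) :
  is_derive f (s * x + c) l -> is_derive (fun y => f (s * y + c)) x (s * l).
Proof.
  intros H. eapply der_eq.
  - apply (is_derive_comp f (fun y => s * y + c) x l s H). auto_derive; auto. ring.
  - reflexivity.
Qed.

Lemma der_neg_arg (f : R -> R) x l :
  is_derive f (- x) l -> is_derive (fun y => f (- y)) x (- l).
Proof.
  intros H.
  assert (H' : is_derive f (-1 * x + 0) l) by (replace (-1 * x + 0) with (- x) by ring; exact H).
  pose proof (der_comp_lin f (-1) 0 x l H') as H2.
  replace (- l) with (-1 * l) by ring.
  eapply is_derive_ext; [|exact H2].
  intros y; simpl; f_equal; ring.
Qed.

Lemma der_scale_arg (f : R -> R) s x l :
  is_derive f (s * x) l -> is_derive (fun y => f (s * y)) x (s * l).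
Proof.
  intros H. eapply is_derive_ext; [|apply (der_comp_lin f s 0 x l)].
  - intros y. simpl. f_equal. ring.
  - replace (s * x + 0) with (s * x) by ring. exact H.
Qed.

Lemma bcont_ext F G a1 b1 a2 b2 t0 t1 :
  (forall x y t, F x y t = G x y t) -> bcont F a1 b1 a2 b2 t0 t1 -> bcont G a1 b1 a2 b2 t0 t1.
Proof.
  intros He HF x y t Hb eps Heps. destruct (HF x y t Hb eps Heps) as [d [Hd H]].
  exists d. split; auto. intros. rewrite <- !He. auto.
Qed.

Definition Lf a del := ln (1 + a ^ 2 / del ^ 2).
Definition Bf a g P del := g * P * Lf a del / PI.
Definition Af g P M := 2 * g * P * M / PI.
Definition Cf a g P M del eps := (Af g P M * del + eps) / Bf a g P del.
Definition Phif a g P M del eps t0 s :=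
  (eps + Cf a g P M del eps) * exp (Bf a g P del * (s - t0)) - Cf a g P M del eps.

Lemma sq_abs_le (e p : R) : 0 <= p -> e * e <= p * p -> Rabs e <= p.
Proof.
  intros Hp H. destruct (Rle_dec 0 e).
  - rewrite Rabs_pos_eq by lra. nra.
  - rewrite Rabs_left by lra. nra.
Qed.

Lemma sq_abs_lt (e p : R) : 0 <= p -> e * e < p * p -> Rabs e < p.
Proof.
  intros Hp H. destruct (Rle_dec 0 e).
  - rewrite Rabs_pos_eq by lra. nra.
  - rewrite Rabs_left by lra. nra.
Qed.

Lemma Lf_pos a del : 0 < a -> 0 < del -> 0 < Lf a del.
Proof.
  intros Ha Hd. unfold Lf. rewrite <- ln_1. apply ln_increasing; [lra|].
  assert (0 < a ^ 2 / del ^ 2) by (apply Rdiv_lt_0_compat; nra). lra.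
Qed.

Lemma key_even (a g : R) (T : Rbar) (rho fx ft : R -> R -> R) (t1 P : R) :
  0 < a -> 0 < g -> 1 <= P -> Rbar_lt t1 T ->
  cont2 T rho ->
  (forall x s, 0 <= s -> Rbar_lt s T -> is_derive (fun y => rho y s) x (fx x s)) ->
  (forall x s, 0 < s -> Rbar_lt s T -> is_derive (fun r => rho x r) s (ft x s)) ->
  (forall s, 0 <= s -> Rbar_lt s T -> periodic (fun x => rho x s)) ->
  (forall x s, 0 < s -> Rbar_lt s T ->
     exists h, is_Ha a (fun y => rho y s) x h /\ ft x s + g * h * fx x s = 0) ->
  (forall x s, 0 <= s <= t1 -> Rabs (fx x s) <= P) ->
  forall t0 s1, 0 <= t0 <= s1 -> s1 <= t1 -> s1 - t0 <= PI / (4 * g * P) ->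
  (forall x, rho x t0 - rho (- x) t0 = 0) -> forall x, rho x s1 - rho (- x) s1 = 0.
Proof.
  intros Ha Hg HP HT1 Hc Hfx Hft Hper Hpde Hb t0 s1 Hts Hs1 Htau H0.
  pose proof PI_RGT_0 as HPI.
  set (Ev := fun x s => rho x s - rho (- x) s).
  set (M := 2 * P).
  assert (HsT : forall s, s <= t1 -> Rbar_lt s T).
  { intros s Hs; eapply Rbar_le_lt_trans; [|exact HT1]; simpl; lra. }
  assert (HdEv : forall x s, 0 <= s <= t1 -> is_derive (fun y => Ev y s) x (fx x s + fx (- x) s)).
  { intros x s Hs. unfold Ev. replace (fx x s + fx (- x) s) with (fx x s - - fx (- x) s) by ring.
    apply der_minus; [apply Hfx; [lra|apply HsT; lra]|].
    apply (der_neg_arg (fun y => rho y s)). apply Hfx; [lra|apply HsT; lra]. }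
  assert (HLip : forall s, 0 <= s <= t1 -> forall z w, Rabs (Ev z s - Ev w s) <= M * Rabs (z - w)).
  { intros s Hs. apply (lip_mvt (fun y => Ev y s) (fun y => fx y s + fx (- y) s)).
    - intros; apply HdEv; auto.
    - intros z. unfold M. pose proof (Hb z s Hs). pose proof (Hb (- z) s Hs).
      pose proof (Rabs_triang (fx z s) (fx (- z) s)). lra. }
  assert (HEper : forall s, 0 <= s <= t1 -> periodic (fun x => Ev x s)).
  { intros s Hs x. unfold Ev. pose proof (Hper s ltac:(lra) (HsT s ltac:(lra))) as Hp.
    assert (e1 : rho (x + 2 * PI) s = rho x s) by apply Hp.
    assert (e2 : rho (- (x + 2 * PI) + 2 * PI) s = rho (- (x + 2 * PI)) s) by apply Hp.
    replace (- (x + 2 * PI) + 2 * PI) with (- x) in e2 by ring.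
    rewrite e1, <- e2. reflexivity. }
  assert (Claim : forall del eps, 0 < del -> 0 < eps -> forall x,
            Rabs (Ev x s1) < Phif a g P M del eps t0 s1).
  { intros del eps Hdel Heps.
    pose proof (Lf_pos a del Ha Hdel) as HL.
    set (L := Lf a del) in *.
    assert (HB : 0 < Bf a g P del).
    { unfold Bf. fold L. apply Rdiv_lt_0_compat; [|lra]. apply Rmult_lt_0_compat; [nra|lra]. }
    assert (HA : 0 <= Af g P M).
    { unfold Af, M. apply Rmult_le_pos; [nra|left; apply Rinv_0_lt_compat; lra]. }
    set (B := Bf a g P del) in *. set (A := Af g P M) in *.
    assert (HC : 0 < Cf a g P M del eps).
    { unfold Cf. fold A B. apply Rdiv_lt_0_compat; [nra|lra]. }
    set (C := Cf a g P M del eps) in *.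
    set (Phi := Phif a g P M del eps t0).
    assert (HPhiE : forall s, Phi s = (eps + C) * exp (B * (s - t0)) - C) by reflexivity.
    assert (HPhi_ge : forall s, t0 <= s -> eps <= Phi s).
    { intros s Hs. rewrite HPhiE. pose proof (exp_ineq1_le (B * (s - t0))).
      assert (0 <= B * (s - t0)) by nra. nra. }
    assert (HBC : B * C = A * del + eps) by (unfold C, Cf; fold A B; field; lra).
    assert (HPhi_der : forall s, is_derive Phi s (B * Phi s + A * del + eps)).
    { intros s. eapply is_derive_ext; [intros; symmetry; apply HPhiE|].
      eapply der_eq; [auto_derive; auto|].
      match goal with |- ?u = ?v => change (@eq R u v) end.
      rewrite HPhiE.
      transitivity (B * ((eps + C) * exp (B * (s - t0)) - C) + B * C).
      - unfold Rminus; ring.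
      - rewrite HBC; ring. }
    set (F := fun x (y : R) s => Phi s * Phi s - Ev x s * Ev x s).
    assert (HFc : bcont F (- PI) PI 0 0 t0 s1).
    { assert (HPc : bcont (fun _ _ s => Phi s) (- PI) PI 0 0 t0 s1).
      { apply bcont_ext with (F := fun _ _ s => (eps + C) * exp (B * (s + - t0)) + - C).
        { intros; rewrite HPhiE; unfold Rminus; reflexivity. }
        apply bcont_plus; [apply bcont_mult; [apply bcont_const|]|apply bcont_const].
        apply (bcont_comp1 exp (fun _ _ s => B * (s + - t0))).
        - intros z; auto_derive; auto.
        - apply bcont_mult; [apply bcont_const| apply bcont_plus; [apply bcont_t|apply bcont_const]]. }
      assert (HEc : bcont (fun x _ s => Ev x s) (- PI) PI 0 0 t0 s1).
      { unfold Ev, Rminus. apply bcont_plus; [| apply bcont_opp].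
        - apply (bcont_rho T rho (fun x _ _ => x)); [exact Hc|lra|apply HsT; lra|apply bcont_x].
        - apply (bcont_rho T rho (fun x _ _ => - x)); [exact Hc|lra|apply HsT; lra|].
          apply bcont_opp, bcont_x. }
      unfold F, Rminus. apply bcont_plus; [apply bcont_mult; auto| apply bcont_opp; apply bcont_mult; auto]. }
    assert (HBox : forall z, exists z', inbox (- PI) PI 0 0 t0 s1 z' 0 s1 /\ Ev z s1 = Ev z' s1).
    { intros z. destruct (periodic_reduce _ (HEper s1 ltac:(lra)) z) as [z' [Hz1 Hz2]].
      exists z'. split; [repeat split; lra|exact Hz2]. }
    destruct (first_touch F (- PI) PI 0 0 t0 s1 HFc) as [Hall | [xs [ys [ts [Hbox [Hts0 [HF0 [Hat Hbef]]]]]]]].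
    { intros x0 y0 Hb0. unfold F.
      assert (Ev x0 t0 = 0) by apply H0. rewrite H.
      pose proof (HPhi_ge t0 (Rle_refl _)). nra. }
    - intros x. destruct (HBox x) as [x' [Hb' He']]. rewrite He'.
      specialize (Hall x' 0 s1 Hb'). unfold F in Hall.
      pose proof (HPhi_ge s1 ltac:(lra)).
      apply sq_abs_lt; lra.
    - exfalso.
      destruct Hbox as [Hxs [Hys Htsr]].
      assert (Hts0' : 0 < ts) by lra.
      assert (HtsT : Rbar_lt ts T) by (apply HsT; lra).
      assert (Htsb : 0 <= ts <= t1) by lra.
      assert (Hsq : forall z, Ev z ts * Ev z ts <= Phi ts * Phi ts).
      { intros z. destruct (periodic_reduce _ (HEper ts Htsb) z) as [z' [Hz1 Hz2]].
        rewrite Hz2. assert (Hb' : inbox (- PI) PI 0 0 t0 s1 z' 0 ts) by (repeat split; lra).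
        specialize (Hat z' 0 Hb'). unfold F in Hat. lra. }
      pose proof (HPhi_ge ts ltac:(lra)) as HPts.
      assert (Habs : forall z, Rabs (Ev z ts) <= Phi ts).
      { intros z. apply sq_abs_le; [lra|apply Hsq]. }
      assert (HEq : Ev xs ts * Ev xs ts = Phi ts * Phi ts) by (unfold F in HF0; lra).
      assert (HdX : is_derive (fun x => F x ys ts) xs
                      (0 - 2 * Ev xs ts * (fx xs ts + fx (- xs) ts))).
      { unfold F. apply der_minus.
        - apply (is_derive_const (K := R_AbsRing) (V := R_NormedModule)).
        - apply (der_sq (fun y => Ev y ts)). apply HdEv; lra. }
      assert (HX0 : 0 - 2 * Ev xs ts * (fx xs ts + fx (- xs) ts) = 0).
      { apply (deriv_min _ _ _ 1 HdX); [lra|].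
        intros h _. unfold F at 1. rewrite HEq.
        unfold F. pose proof (Hsq (xs + h)). lra. }
      assert (HEv0 : Ev xs ts <> 0) by (intros He; rewrite He in HEq; nra).
      assert (Hfxm : fx (- xs) ts = - fx xs ts).
      { assert (Ev xs ts * (fx xs ts + fx (- xs) ts) = 0) by lra.
        apply Rmult_integral in H. destruct H; [contradiction|lra]. }
      assert (HdT : is_derive (fun s => F xs ys s) ts
               (2 * Phi ts * (B * Phi ts + A * del + eps) -
                2 * Ev xs ts * (ft xs ts - ft (- xs) ts))).
      { unfold F. apply der_minus.
        - apply der_sq. apply HPhi_der.
        - apply (der_sq (fun s => Ev xs s)). unfold Ev. apply der_minus; apply Hft; auto. }
      assert (HT0 : 2 * Phi ts * (B * Phi ts + A * del + eps) -
                    2 * Ev xs ts * (ft xs ts - ft (- xs) ts) <= 0).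
      { apply (deriv_left_le _ _ _ (ts - t0) HdT); [lra|].
        intros h Hh. unfold F at 1. rewrite HEq.
        specialize (Hbef (ts - h) ltac:(lra)). unfold F in Hbef |- *. lra. }
      destruct (Hpde xs ts Hts0' HtsT) as [h1 [Hh1 Ep1]].
      destruct (Hpde (- xs) ts Hts0' HtsT) as [h2 [Hh2 Ep2]].
      assert (HM0 : 0 <= M) by (unfold M; lra).
      pose proof (Ha_bound a (fun y => rho y ts) xs h1 h2 M (Phi ts) del Ha Hdel HM0 ltac:(lra)
                   Hh1 Hh2 (fun z => Habs z) (fun z w => HLip ts Htsb z w)) as Hhb.
      set (fxs := fx xs ts) in *.
      assert (HEt : ft xs ts - ft (- xs) ts = - g * fxs * (h1 + h2)).
      { rewrite Hfxm in Ep2. nra. }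
      rewrite HEt in HT0.
      assert (Hfb : Rabs fxs <= P) by (apply Hb; lra).
      assert (HEtb : Rabs (- g * fxs * (h1 + h2)) <= A * del + B * Phi ts).
      { rewrite !Rabs_mult, Rabs_Ropp, (Rabs_pos_eq g) by lra.
        apply Rle_trans with (g * P * Rabs (h1 + h2)).
        - apply Rmult_le_compat_r; [apply Rabs_pos|]. apply Rmult_le_compat_l; lra.
        - apply Rle_trans with (g * P * (2 * M * del / PI + Phi ts / PI * ln (1 + a ^ 2 / del ^ 2))).
          + apply Rmult_le_compat_l; [nra|exact Hhb].
          + right. unfold A, B, Af, Bf, L, Lf. field. lra. }
      set (Et := - g * fxs * (h1 + h2)) in *.
      assert (Hprod : Ev xs ts * Et <= Phi ts * (A * del + B * Phi ts)).
      { apply Rle_trans with (Rabs (Ev xs ts * Et)); [apply Rle_abs|].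
        rewrite Rabs_mult. apply Rmult_le_compat; try apply Rabs_pos; auto. }
      nra.
  }
  intros x. change (Ev x s1 = 0).
  assert (exp_mono : forall u v, u <= v -> exp u <= exp v).
  { intros u v Huv. destruct (Rle_lt_or_eq_dec u v Huv) as [Hl|He].
    - left; apply exp_increasing; exact Hl.
    - rewrite He; lra. }
  assert (Hln2 : 0 < ln 2) by (rewrite <- ln_1; apply ln_increasing; lra).
  assert (HM0 : 0 <= M) by (unfold M; lra).
  set (Y := Rabs (Ev x s1)).
  assert (HY : forall del, 0 < del -> del <= 1 -> del <= a ->
            Y <= (2 * M / ln 2) * (del * exp (Lf a del / 4))).
  { intros del Hdel Hd1 Hda.
    pose proof (Lf_pos a del Ha Hdel) as HL.
    assert (HL2 : ln 2 <= Lf a del).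
    { unfold Lf. apply ln_le; [lra|].
      assert (1 <= a ^ 2 / del ^ 2).
      { apply Rcomplements.Rle_div_r; [nra|]. nra. }
      lra. }
    set (L := Lf a del) in *.
    assert (HB : 0 < Bf a g P del).
    { unfold Bf. fold L. apply Rdiv_lt_0_compat; [|lra]. apply Rmult_lt_0_compat; [nra|lra]. }
    assert (HA : 0 <= Af g P M).
    { unfold Af. apply Rmult_le_pos; [apply Rmult_le_pos; [nra|lra]|left; apply Rinv_0_lt_compat; lra]. }
    set (B := Bf a g P del) in *. set (A := Af g P M) in *.
    set (X := exp (B * (s1 - t0))).
    assert (HX1 : 1 <= X).
    { unfold X. pose proof (exp_ineq1_le (B * (s1 - t0))). assert (0 <= B * (s1 - t0)) by nra. lra. }
    assert (HXL : X <= exp (L / 4)).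
    { unfold X. apply exp_mono.
      apply Rle_trans with (B * (PI / (4 * g * P))).
      - apply Rmult_le_compat_l; lra.
      - right. unfold B, Bf. fold L. field. lra. }
    assert (HYle : Y <= A * del / B * X).
    { apply Rle_plus_epsilon. intros e' He'.
      assert (HXB : 0 < X + X / B) by (assert (0 < X / B) by (apply Rdiv_lt_0_compat; lra); lra).
      set (eps := e' / (X + X / B)).
      assert (Heps : 0 < eps) by (apply Rdiv_lt_0_compat; lra).
      pose proof (Claim del eps Hdel Heps x) as Hc'.
      unfold Phif, Cf in Hc'. fold L A B X in Hc'.
      fold Y in Hc'.
      assert (E1 : (eps + (A * del + eps) / B) * X - (A * del + eps) / B
                   = A * del / B * X + eps * (X + X / B) - (A * del + eps) / B) by (field; lra).
      assert (E2 : eps * (X + X / B) = e') by (unfold eps; field; split; [lra|nra]).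
      assert (0 <= (A * del + eps) / B) by (apply Rdiv_le_0_compat; nra).
      lra. }
    assert (HAB : A * del / B * X = (2 * M / L) * (del * X)).
    { unfold A, B, Af, Bf. fold L. field. repeat split; lra. }
    rewrite HAB in HYle.
    apply Rle_trans with (2 * M / L * (del * X)); [exact HYle|].
    apply Rmult_le_compat.
    - apply Rdiv_le_0_compat; lra.
    - nra.
    - unfold Rdiv. apply Rmult_le_compat_l; [lra|]. apply Rinv_le_contravar; lra.
    - apply Rmult_le_compat_l; lra. }
  assert (HY0 : Y <= 0).
  { apply Rnot_lt_le. intros HYp.
    set (K := 2 * M / ln 2).
    assert (HK : 0 <= K) by (apply Rdiv_le_0_compat; lra).
    set (Q := K ^ 4 * (1 + a ^ 2)).
    assert (HQ : 0 <= Q) by (unfold Q; apply Rmult_le_pos; [apply pow_le; lra|nra]).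
    set (del := Rmin (Rmin 1 a) (Y ^ 2 / (Q + 1))).
    assert (HY2 : 0 < Y ^ 2 / (Q + 1)) by (apply Rdiv_lt_0_compat; nra).
    assert (Hdel : 0 < del) by (unfold del; repeat apply Rmin_glb_lt; lra).
    assert (Hd1 : del <= 1) by (unfold del; pose proof (Rmin_l (Rmin 1 a) (Y ^ 2 / (Q + 1)));
                               pose proof (Rmin_l 1 a); lra).
    assert (Hda : del <= a) by (unfold del; pose proof (Rmin_l (Rmin 1 a) (Y ^ 2 / (Q + 1)));
                               pose proof (Rmin_r 1 a); lra).
    assert (Hdy : del <= Y ^ 2 / (Q + 1)) by (unfold del; apply Rmin_r).
    specialize (HY del Hdel Hd1 Hda). fold K in HY.
    set (E4 := exp (Lf a del / 4)) in *.
    assert (HE4 : E4 ^ 4 = 1 + a ^ 2 / del ^ 2).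
    { unfold E4.
      replace (exp (Lf a del / 4) ^ 4) with (exp (Lf a del / 4) * (exp (Lf a del / 4) * (exp (Lf a del / 4) * exp (Lf a del / 4)))) by ring.
      rewrite <- !exp_plus.
      replace (Lf a del / 4 + (Lf a del / 4 + (Lf a del / 4 + Lf a del / 4))) with (Lf a del) by field.
      unfold Lf. apply exp_ln.
      assert (0 < a ^ 2 / del ^ 2) by (apply Rdiv_lt_0_compat; nra). lra. }
    assert (HE4p : 0 < E4) by apply exp_pos.
    assert (HY4 : Y ^ 4 <= (K * (del * E4)) ^ 4).
    { apply pow_incr. split; [unfold Y; apply Rabs_pos|exact HY]. }
    assert (HR : (K * (del * E4)) ^ 4 = K ^ 4 * (del ^ 4 + a ^ 2 * del ^ 2)).
    { rewrite !Rpow_mult_distr, HE4. field. lra. }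
    rewrite HR in HY4.
    assert (Hd4 : del ^ 4 <= del ^ 2) by (assert (del ^ 2 <= 1) by nra; nra).
    assert (HY4' : Y ^ 4 <= Q * del ^ 2).
    { unfold Q. apply Rle_trans with (K ^ 4 * (del ^ 4 + a ^ 2 * del ^ 2)); [exact HY4|].
      assert (0 <= K ^ 4) by (apply pow_le; lra). nra. }
    assert (Hdd : del ^ 2 <= (Y ^ 2 / (Q + 1)) ^ 2) by (apply pow_incr; lra).
    assert (HZ : (Y ^ 2 / (Q + 1)) ^ 2 * (Q + 1) ^ 2 = Y ^ 4) by (field; lra).
    assert (Q * del ^ 2 <= Q * (Y ^ 2 / (Q + 1)) ^ 2) by (apply Rmult_le_compat_l; lra).
    assert (0 < Y ^ 4) by (apply pow_lt; lra).
    set (W := (Y ^ 2 / (Q + 1)) ^ 2) in *.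
    assert (0 < W) by (unfold W; apply pow_lt; lra).
    nra. }
  assert (Ev x s1 = 0 \/ Ev x s1 <> 0) by (destruct (Req_dec (Ev x s1) 0); auto).
  destruct H as [H|H]; auto.
  exfalso. pose proof (Rabs_pos_lt _ H). unfold Y in HY0. lra.
Qed.


Lemma rho0_mono (rho0 : R -> R) :
  smooth1 rho0 -> periodic rho0 -> (forall x, rho0 (- x) = rho0 x) ->
  (forall x, 0 <= x < PI -> 0 <= Derive rho0 x) ->
  forall u y, 0 <= u <= 1 -> 0 <= y <= PI -> rho0 (y * u) <= rho0 y.
Proof.
  intros Hs Hp He Hd u y Hu Hy.
  assert (HD : forall z, is_derive rho0 z (Derive rho0 z)).
  { intros z. apply Derive_correct. exact (Hs 0%nat z). }
  assert (HPI0 : Derive rho0 PI = 0).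
  { apply (deriv_sym rho0 (2 * PI)).
    - intros z. replace (2 * PI - z) with (- z + 2 * PI) by ring. rewrite Hp. apply He.
    - replace (2 * PI / 2) with PI by field. apply HD. }
  destruct (MVT_gen rho0 (y * u) y (Derive rho0)) as [c [Hc Heq]].
  - intros; apply HD.
  - intros z _. apply continuity_pt_filterlim.
    apply (ex_derive_continuous (V := R_NormedModule)). exists (Derive rho0 z). apply HD.
  - rewrite Rmin_left, Rmax_right in Hc by nra.
    assert (0 <= Derive rho0 c).
    { destruct (Req_dec c PI) as [E|E]; [rewrite E, HPI0; lra|]. apply Hd. nra. }
    assert (0 <= y - y * u) by nra. nra.
Qed.

Theorem lemma4p2 (a g : R) (T : Rbar) (rho0 : R -> R) (rho : R -> R -> R) :
  0 < a -> 0 < g ->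
  smooth1 rho0 -> periodic rho0 ->
  (forall x, rho0 (- x) = rho0 x) ->
  (forall x, 0 <= rho0 x) ->
  rho0 0 = 0 ->
  (forall x, 0 <= x < PI -> 0 <= Derive rho0 x) ->
  smooth2 T rho ->
  (forall t, 0 <= t -> Rbar_lt t T -> periodic (fun x => rho x t)) ->
  (forall x t, 0 < t -> Rbar_lt t T ->
     exists h, is_Ha a (fun y => rho y t) x h /\
       Derive (fun s => rho x s) t + g * h * Derive (fun y => rho y t) x = 0) ->
  (forall x, rho x 0 = rho0 x) ->
  forall t, 0 <= t -> Rbar_lt t T ->
    (forall x, rho (- x) t = rho x t) /\
    (forall x, 0 <= rho x t) /\
    rho 0 t = 0 /\
    (forall x, 0 <= x < PI -> 0 <= Derive (fun y => rho y t) x).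
Proof.
  intros Ha Hg Hs0 Hp0 He0 Hn0 Hz0 Hd0 Hsm Hper Hpde Hinit t1 Ht10 Ht1T.
  pose proof PI_RGT_0 as HPI.
  destruct (Hsm 1%nat) as [Hc [fx [ft [Hfx [Hft [Hcx Hct]]]]]].
  simpl in Hcx, Hct.
  assert (HsT : forall s, s <= t1 -> Rbar_lt s T).
  { intros s Hs; eapply Rbar_le_lt_trans; [|exact Ht1T]; simpl; lra. }
  assert (Hpde' : forall x s, 0 < s -> Rbar_lt s T ->
     exists h, is_Ha a (fun y => rho y s) x h /\ ft x s + g * h * fx x s = 0).
  { intros x s Hs HsT'. destruct (Hpde x s Hs HsT') as [h [H1 H2]]. exists h. split; auto.
    replace (Derive (fun r => rho x r) s) with (ft x s) in H2
      by (symmetry; apply is_derive_unique; apply Hft; auto).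
    replace (Derive (fun y => rho y s) x) with (fx x s) in H2
      by (symmetry; apply is_derive_unique; apply Hfx; auto; lra).
    exact H2. }
  assert (Hfxper : forall s, 0 <= s -> Rbar_lt s T -> periodic (fun x => fx x s)).
  { intros s Hs HsT' x. simpl.
    assert (H1 : is_derive (fun y => rho (1 * y + 2 * PI) s) x (1 * fx (x + 2 * PI) s)).
    { apply (der_comp_lin (fun y => rho y s)). replace (1 * x + 2 * PI) with (x + 2 * PI) by ring.
      apply Hfx; auto. }
    assert (H2 : is_derive (fun y => rho y s) x (1 * fx (x + 2 * PI) s)).
    { eapply is_derive_ext; [|exact H1]. intros y. simpl.
      replace (1 * y + 2 * PI) with (y + 2 * PI) by ring. apply (Hper s Hs HsT'). }
    pose proof (is_derive_unique _ _ _ H2) as U1.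
    rewrite (is_derive_unique _ _ _ (Hfx x s Hs HsT')) in U1. lra. }
  destruct (bcont_bounded (fun x _ s => fx x s) (- PI) PI 0 0 0 t1) as [P0 HP0].
  { apply (bcont_rho T fx (fun x _ _ => x)); [exact Hcx|lra|exact Ht1T|apply bcont_x]. }
  set (P := Rmax 1 P0).
  assert (HP1 : 1 <= P) by apply Rmax_l.
  assert (HPb : forall x s, 0 <= s <= t1 -> Rabs (fx x s) <= P).
  { intros x s Hs. destruct (periodic_reduce _ (Hfxper s ltac:(lra) (HsT s ltac:(lra))) x) as [x' [Hx' Ex]].
    simpl in Ex. rewrite Ex. apply Rle_trans with P0; [|apply Rmax_r].
    apply (HP0 x' 0 s). repeat split; lra. }
  set (tau := PI / (4 * g * P)).
  assert (Htau : 0 < tau) by (unfold tau; apply Rdiv_lt_0_compat; nra).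
  assert (Hind : forall n : nat, forall s, 0 <= s <= t1 -> s <= INR n * tau ->
            forall x, rho x s - rho (- x) s = 0).
  { induction n as [|n IH]; intros s Hs Hsn x.
    - simpl in Hsn. assert (s = 0) by lra. subst s.
      rewrite !Hinit, He0. ring.
    - destruct (Rle_dec s (INR n * tau)) as [Hl|Hl]; [apply IH; auto|].
      assert (HnN : 0 <= INR n * tau) by (apply Rmult_le_pos; [apply pos_INR|lra]).
      rewrite S_INR, Rmult_plus_distr_r, Rmult_1_l in Hsn.
      assert (Hst : s - INR n * tau <= PI / (4 * g * P)) by (fold tau; lra).
      apply (key_even a g T rho fx ft t1 P Ha Hg HP1 Ht1T Hc Hfx Hft Hper Hpde' HPb (INR n * tau) s);
        try lra.
      intros x0. apply IH; lra. }
  assert (Heven : forall s, 0 <= s <= t1 -> forall x, rho (- x) s = rho x s).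
  { intros s Hs x. destruct (nat_above (t1 / tau)) as [n Hn].
    assert (t1 <= INR n * tau).
    { assert (t1 / tau * tau = t1) by (field; lra). nra. }
    pose proof (Hind n s Hs ltac:(lra) x). lra. }
  assert (Hfx0 : forall s, 0 <= s <= t1 -> fx 0 s = 0).
  { intros s Hs. apply (deriv_sym (fun y => rho y s) 0).
    - intros y. replace (0 - y) with (- y) by ring. apply Heven; auto.
    - replace (0 / 2) with 0 by field. apply Hfx; [lra|apply HsT; lra]. }
  assert (HfxPI : forall s, 0 <= s <= t1 -> fx PI s = 0).
  { intros s Hs. apply (deriv_sym (fun y => rho y s) (2 * PI)).
    - intros y. replace (2 * PI - y) with (- y + 2 * PI) by ring.
      rewrite (Hper s ltac:(lra) (HsT s ltac:(lra)) (- y)). apply Heven; auto.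
    - replace (2 * PI / 2) with PI by field. apply Hfx; [lra|apply HsT; lra]. }
  assert (Hft0 : forall s, 0 < s <= t1 -> ft 0 s = 0).
  { intros s Hs. destruct (Hpde' 0 s ltac:(lra) (HsT s ltac:(lra))) as [h [_ Eh]].
    rewrite Hfx0 in Eh by lra. lra. }
  assert (Hzero : forall s, 0 <= s <= t1 -> rho 0 s = 0).
  { intros s Hs. destruct (Req_dec s 0) as [E|E].
    { subst s. rewrite Hinit. exact Hz0. }
    assert (Hconst : forall r, 0 < r <= s -> rho 0 s = rho 0 r).
    { intros r Hr. destruct (MVT_gen (fun q => rho 0 q) r s (fun q => ft 0 q)) as [c [Hcc Heq]].
      - intros q Hq. rewrite Rmin_left, Rmax_right in Hq by lra.
        apply Hft; [lra|apply HsT; lra].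
      - intros q Hq. rewrite Rmin_left, Rmax_right in Hq by lra.
        apply continuity_pt_filterlim.
        apply (ex_derive_continuous (V := R_NormedModule)). exists (ft 0 q).
        apply Hft; [lra|apply HsT; lra].
      - rewrite Rmin_left, Rmax_right in Hcc by lra.
        rewrite Hft0 in Heq by lra. lra. }
    apply Rabs_eq_0. apply Rle_antisym; [|apply Rabs_pos].
    apply Rle_plus_epsilon. intros e He.
    destruct (cont2_eps T rho 0 0 Hc (Rle_refl 0) (HsT 0 ltac:(lra)) e He) as [d [Hd Hd']].
    set (r := Rmin s (d / 2)).
    assert (Hr : 0 < r <= s /\ r < d).
    { unfold r. pose proof (Rmin_l s (d/2)). pose proof (Rmin_r s (d/2)).
      assert (0 < Rmin s (d/2)) by (apply Rmin_glb_lt; lra). lra. }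
    rewrite (Hconst r) by lra.
    specialize (Hd' 0 r ltac:(lra) (HsT r ltac:(lra))).
    rewrite Rminus_0_r, Rabs_R0, Rabs_pos_eq in Hd' by lra.
    specialize (Hd' Hd ltac:(lra)). rewrite Hinit, Hz0, Rminus_0_r in Hd'. lra. }
  assert (Hmono : forall s, 0 <= s <= t1 -> forall u y, 0 <= u <= 1 -> 0 <= y <= PI ->
            rho (y * u) s <= rho y s).
  { intros s Hs u y Hu Hy.
    apply Rle_plus_epsilon. intros e' He'.
    set (eps := e' / (1 + t1)).
    assert (Heps : 0 < eps) by (apply Rdiv_lt_0_compat; lra).
    set (F := fun u y s => rho y s - rho (y * u) s + eps * (1 + s)).
    assert (HFc : bcont F 0 1 0 PI 0 t1).
    { unfold F, Rminus. apply bcont_plus; [apply bcont_plus; [|apply bcont_opp]|].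
      - apply (bcont_rho T rho (fun _ y _ => y)); [exact Hc|lra|exact Ht1T|apply bcont_y].
      - apply (bcont_rho T rho (fun u y _ => y * u)); [exact Hc|lra|exact Ht1T|].
        apply bcont_mult; [apply bcont_y|apply bcont_x].
      - apply bcont_mult; [apply bcont_const|apply bcont_plus; [apply bcont_const|apply bcont_t]]. }
    destruct (first_touch F 0 1 0 PI 0 t1 HFc) as [Hall | [us [ys [ts [Hbox [Hts0 [HF0 [Hat Hbef]]]]]]]].
    { intros u0 y0 [Hu0 [Hy0 _]]. unfold F. rewrite !Hinit.
      pose proof (rho0_mono rho0 Hs0 Hp0 He0 Hd0 u0 y0 Hu0 Hy0). lra. }
    - assert (Hb' : inbox 0 1 0 PI 0 t1 u y s) by (repeat split; lra).
      specialize (Hall u y s Hb'). unfold F in Hall.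
      assert (eps * (1 + t1) = e') by (unfold eps; field; lra).
      assert (eps * (1 + s) <= eps * (1 + t1)) by (apply Rmult_le_compat_l; lra). lra.
    - exfalso. destruct Hbox as [Hus [Hys Hts]].
      assert (Hts0' : 0 < ts) by lra.
      assert (HtsT : Rbar_lt ts T) by (apply HsT; lra).
      assert (HFneg : rho ys ts - rho (ys * us) ts < 0).
      { unfold F in HF0. assert (0 < eps * (1 + ts)) by (apply Rmult_lt_0_compat; lra). lra. }
      assert (Hys0 : 0 < ys).
      { destruct (Req_dec ys 0) as [E|E]; [|lra]. rewrite E, Rmult_0_l in HFneg. lra. }
      assert (Hus1 : us < 1).
      { destruct (Req_dec us 1) as [E|E]; [|lra]. rewrite E, Rmult_1_r in HFneg. lra. }
      assert (Hfu : fx (ys * us) ts = 0).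
      { destruct (Req_dec us 0) as [E|E].
        - rewrite E, Rmult_0_r. apply Hfx0; lra.
        - assert (Hd : is_derive (fun u => F u ys ts) us (0 - ys * fx (ys * us) ts)).
          { eapply is_derive_ext with (f := fun u => (rho ys ts + eps * (1 + ts)) - rho (ys * u) ts).
            { intros u0. unfold F. match goal with |- ?a = ?b => change (@eq R a b) end. ring. }
            apply der_minus.
            - apply (is_derive_const (K := R_AbsRing) (V := R_NormedModule)).
            - apply (der_scale_arg (fun z => rho z ts)). apply Hfx; [lra|exact HtsT]. }
          assert (Hd0' : 0 - ys * fx (ys * us) ts = 0).
          { apply (deriv_min _ _ _ (Rmin us (1 - us)) Hd).
            - apply Rmin_glb_lt; lra.
            - intros h Hh. pose proof (Rmin_l us (1 - us)). pose proof (Rmin_r us (1 - us)).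
              apply Rabs_def2 in Hh.
              assert (Hb2 : inbox 0 1 0 PI 0 t1 (us + h) ys ts) by (repeat split; lra).
              specialize (Hat _ _ Hb2). lra. }
          assert (ys * fx (ys * us) ts = 0) by lra.
          apply Rmult_integral in H. destruct H; [lra|auto]. }
      assert (Hfy : fx ys ts = 0).
      { destruct (Req_dec ys PI) as [E|E]; [rewrite E; apply HfxPI; lra|].
        assert (Hd : is_derive (fun y => F us y ts) ys (fx ys ts - us * fx (us * ys) ts + 0)).
        { eapply is_derive_ext with (f := fun y => (rho y ts - rho (us * y) ts) + eps * (1 + ts)).
          { intros y0. unfold F. match goal with |- ?a = ?b => change (@eq R a b) end. rewrite (Rmult_comm y0 us). reflexivity. }
          apply (is_derive_plus (K := R_AbsRing) (V := R_NormedModule)).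
          - apply der_minus; [apply Hfx; [lra|exact HtsT]|].
            apply (der_scale_arg (fun z => rho z ts)). apply Hfx; [lra|exact HtsT].
          - apply (is_derive_const (K := R_AbsRing) (V := R_NormedModule)). }
        assert (Hd0' : fx ys ts - us * fx (us * ys) ts + 0 = 0).
        { apply (deriv_min _ _ _ (Rmin ys (PI - ys)) Hd).
          - apply Rmin_glb_lt; lra.
          - intros h Hh. pose proof (Rmin_l ys (PI - ys)). pose proof (Rmin_r ys (PI - ys)).
            apply Rabs_def2 in Hh.
            assert (Hb2 : inbox 0 1 0 PI 0 t1 us (ys + h) ts) by (repeat split; lra).
            specialize (Hat _ _ Hb2). lra. }
        rewrite (Rmult_comm us ys), Hfu in Hd0'. lra. }
      assert (Hft1 : ft ys ts = 0).
      { destruct (Hpde' ys ts Hts0' HtsT) as [h [_ Eh]]. rewrite Hfy in Eh. lra. }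
      assert (Hft2 : ft (ys * us) ts = 0).
      { destruct (Hpde' (ys * us) ts Hts0' HtsT) as [h [_ Eh]]. rewrite Hfu in Eh. lra. }
      assert (Hd : is_derive (fun s => F us ys s) ts (ft ys ts - ft (ys * us) ts + eps * 1)).
      { unfold F. apply (is_derive_plus (K := R_AbsRing) (V := R_NormedModule)).
        - apply der_minus; apply Hft; auto.
        - auto_derive; auto. }
      assert (Hle : ft ys ts - ft (ys * us) ts + eps * 1 <= 0).
      { apply (deriv_left_le _ _ _ ts Hd); [lra|].
        intros h Hh. specialize (Hbef (ts - h) ltac:(lra)). lra. }
      rewrite Hft1, Hft2 in Hle. lra. }
  split; [intros x; apply Heven; lra|].
  split; [|split; [apply Hzero; lra|]].
  - intros x. destruct (periodic_reduce _ (Hper t1 Ht10 Ht1T) x) as [x' [Hx' Ex]].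
    simpl in Ex. rewrite Ex.
    assert (Hab : rho x' t1 = rho (Rabs x') t1).
    { destruct (Rle_dec 0 x') as [Hx0|Hx0].
      - rewrite Rabs_pos_eq; auto.
      - rewrite Rabs_left by lra. symmetry; apply Heven; lra. }
    rewrite Hab.
    assert (HaPI : 0 <= Rabs x' <= PI) by (split; [apply Rabs_pos|apply Rabs_le; lra]).
    pose proof (Hmono t1 ltac:(lra) 0 (Rabs x') ltac:(lra) HaPI) as Hm.
    rewrite Rmult_0_r, Hzero in Hm by lra. exact Hm.
  - intros x Hx.
    replace (Derive (fun y => rho y t1) x) with (fx x t1)
      by (symmetry; apply is_derive_unique; apply Hfx; auto).
    apply (deriv_right_ge (fun y => rho y t1) x (fx x t1) (PI - x)); [apply Hfx; auto|lra|].
    intros h Hh.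
    assert (Hxh : 0 < x + h) by lra.
    assert (Hu : 0 <= x / (x + h) <= 1).
    { split; [apply Rdiv_le_0_compat; lra|]. apply Rcomplements.Rle_div_l; lra. }
    pose proof (Hmono t1 ltac:(lra) (x / (x + h)) (x + h) Hu ltac:(lra)) as Hm.
    replace ((x + h) * (x / (x + h))) with x in Hm by (field; lra). exact Hm.
Qed.
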